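(* Let $x_1,\dots,x_k\in\ell^\infty$ with $|L_{x_i}|=n_i\in\mathbb{N}$ for $1\le i\le k$, and let $z=\sum_{i=1}^k a_ix_i$ with real coefficients and $a_k\ne0$. Then $$\frac{n_k}{n_1\cdots n_{k-1}}\le |L_z|\le n_1\cdots n_k.$$
   Context: $\ell^\infty$ is the space of bounded real sequences. For $x\in\ell^\infty$, $L_x$ denotes the set of accumulation points (subsequential limits) of $x$ and $|L_x|$ its cardinality. *)

(* Defs.v *)
From HB Require Import structures.
From mathcomp Require Import all_boot all_order all_algebra.
From mathcomp Require Import all_classical all_reals all_analysis.
Set Implicit Arguments. Unset Strict Implicit. Unset Printing Implicit Defensive.
Import Order.TTheory GRing.Theory Num.Theory.
Import numFieldNormedType.Exports.
Local Open Scope classical_set_scope.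
Local Open Scope ring_scope.

Definition bounded_seq (R : realType) (x : nat -> R) : Prop :=
  exists M : R, forall m, `|x m| <= M.

Definition acc_pts (R : realType) (x : nat -> R) : set R :=
  [set l | exists phi : nat -> nat,
      (forall m, (phi m < phi m.+1)%N) /\ (x \o phi) @ \oo --> l].

(* Main.v *)
Require Import Defs.
From HB Require Import structures.
From mathcomp Require Import all_boot all_order all_algebra.
From mathcomp Require Import all_classical all_reals all_analysis.
Import Order.TTheory GRing.Theory Num.Theory.
Import numFieldNormedType.Exports.
Local Open Scope classical_set_scope.
Local Open Scope ring_scope.

Lemma enum_of (R : realType) (A : set R) m : (A #= `I_m)%card ->
  exists e : nat -> R, (forall j, (j < m)%N -> A (e j)) /\
    (forall l, A l -> exists2 j, (j < m)%N & e j = l).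
Proof.
move/card_esym/pcard_eqP => [f]; exists f; split.
  by move=> j jm; apply: funS.
by move=> l Al; have [j jm <-] := (@surj _ _ _ _ f) l Al; exists j.
Qed.

Lemma card_fin_bound (T : finType) (U : Type) (G : T -> U) (A : set U) :
  A `<=` range G -> exists N, (A #= `I_N)%card /\ (N <= #|T|)%N.
Proof.
move=> AG.
have h1 : (A #<= [set: T])%card.
  exact: card_le_trans (subset_card_le AG) (card_image_le G setT).
pose f := fun t : T => val (enum_rank t).
have finj : {in [set: T] &, injective f}.
  by move=> a b _ _ /val_inj/enum_rank_inj.
have h2 : ([set: T] #<= `I_#|T|)%card.
  rewrite -(card_le_eql (inj_card_eq finj)); apply: subset_card_le.
  by move=> _ [t _ <-]; rewrite /f /=; exact: ltn_ord.
have h3 := card_le_trans h1 h2.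
have [N HN] := card_le_finite h3 (finite_II _).
exists N; split => //.
by rewrite (card_le_eql HN) card_le_II in h3.
Qed.

Lemma inc_comp (phi psi : nat -> nat) : (forall m, (phi m < phi m.+1)%N) ->
  (forall m, (psi m < psi m.+1)%N) -> forall m, (phi (psi m) < phi (psi m.+1))%N.
Proof.
move=> hphi hpsi m; have h := homo_ltn ltn_trans hphi; exact: h.
Qed.

Lemma inc_ge (psi : nat -> nat) : (forall m, (psi m < psi m.+1)%N) ->
  forall m, (m <= psi m)%N.
Proof.
move=> h; elim=> // m IH; exact: leq_ltn_trans IH (h m).
Qed.

Lemma subseq_cvg (R : realType) (u : nat -> R) (c : R) (psi : nat -> nat) :
  (forall m, (psi m < psi m.+1)%N) -> u @ \oo --> c -> (u \o psi) @ \oo --> c.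
Proof.
move=> hpsi hu P /hu [N _ HP]; exists N => // m /= Nm; apply: HP => /=.
by apply/(leq_trans Nm)/inc_ge.
Qed.

Lemma BW_acc (R : realType) (y : nat -> R) (phi : nat -> nat) :
  bounded_seq y -> (forall m, (phi m < phi m.+1)%N) ->
  exists psi : nat -> nat, (forall m, (psi m < psi m.+1)%N) /\
    exists l, acc_pts y l /\ (y \o phi \o psi) @ \oo --> l.
Proof.
move=> [M hM] hphi.
have bnd : bounded_fun (y \o phi).
  exists M; split; first exact: num_real.
  move=> r Mr x _ /=; exact: le_trans (hM _) (ltW Mr).
have [f /increasing_seqP finc /cvg_ex [l hl]] := bolzano_weierstrass bnd.
exists f; split; first by move=> m; exact: finc.
exists l; split => //.
exists (phi \o f); split.
  by move=> m; exact: (@inc_comp phi f hphi (fun j => finc j) m).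
exact: hl.
Qed.

Lemma lincomb_cvg (R : realType) (I : Type) (r : seq I) (a : I -> R)
  (u : I -> nat -> R) (l : I -> R) :
  (forall i, u i @ \oo --> l i) ->
  (fun m => \sum_(i <- r) a i * u i m) @ \oo --> \sum_(i <- r) a i * l i.
Proof.
move=> hu; elim: r => [|i r IH].
  rewrite big_nil (_ : (fun _ => _) = fun _ => 0); first exact: cvg_cst.
  by apply/funext => m; rewrite big_nil.
rewrite big_cons (_ : (fun _ => _) = (fun m => a i * u i m + \sum_(j <- r) a j * u j m)).
  by apply: cvgD => //; apply: cvgMr; exact: hu.
by apply/funext => m; rewrite big_cons.
Qed.

Lemma multi_extract (R : realType) k (x : 'I_k.+1 -> nat -> R)
  (hb : forall i, bounded_seq (x i)) (phi : nat -> nat)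
  (hphi : forall m, (phi m < phi m.+1)%N) :
  forall j, (j <= k.+1)%N -> exists psi : nat -> nat,
    (forall m, (psi m < psi m.+1)%N) /\ exists l : 'I_k.+1 -> R,
    forall i : 'I_k.+1, (i < j)%N ->
      acc_pts (x i) (l i) /\ (x i \o (phi \o psi)) @ \oo --> l i.
Proof.
elim=> [_|j IH hj].
  by exists id; split => // ; exists (fun=> 0).
have [psi [hpsi [l hl]]] := IH (ltnW hj).
have [psi' [hpsi' [c [hc1 hc2]]]] :=
  @BW_acc R (x (Ordinal hj)) (phi \o psi) (hb _) (@inc_comp phi psi hphi hpsi).
exists (psi \o psi'); split.
  by move=> m; exact: (@inc_comp psi psi' hpsi hpsi' m).
exists (fun i => if val i == j then c else l i) => i ij.
case: eqP => [ei|nei].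
  have -> : i = Ordinal hj by apply: val_inj.
  by split.
have ij' : (i < j)%N by rewrite ltn_neqAle -ltnS ij andbT; apply/eqP.
have [h1 h2] := hl i ij'; split => //.
exact: (@subseq_cvg R _ _ psi' hpsi' h2).
Qed.

Theorem lemma2p5 (R : realType) (k : nat) (x : 'I_k.+1 -> nat -> R)
  (n : 'I_k.+1 -> nat) (a : 'I_k.+1 -> R)
  (hb : forall i, bounded_seq (x i))
  (hn : forall i, (acc_pts (x i) #= `I_(n i))%card)
  (hak : a ord_max != 0) :
  let z := fun m => \sum_(i < k.+1) a i * x i m in
  exists N : nat, (acc_pts z #= `I_N)%card /\
    (n ord_max)%:R / (\prod_(i < k.+1 | i != ord_max) n i)%:R <= (N%:R : R) /\
    (N <= \prod_(i < k.+1) n i)%N.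
Proof.
move=> z.
have [e [eIn eSurj]] : exists e : 'I_k.+1 -> nat -> R,
    (forall i j, (j < n i)%N -> acc_pts (x i) (e i j)) /\
    (forall i l, acc_pts (x i) l -> exists2 j, (j < n i)%N & e i j = l).
  have /fin_all_exists[e He] := fun i => @enum_of R _ _ (hn i).
  by exists e; split => i; [exact: (He i).1 | exact: (He i).2].
have zlim : forall (phi psi : nat -> nat) (l : 'I_k.+1 -> R),
    (forall i, (x i \o (phi \o psi)) @ \oo --> l i) ->
    (z \o (phi \o psi)) @ \oo --> \sum_(i < k.+1) a i * l i.
  move=> phi psi l h.
  exact: (@lincomb_cvg R _ (index_enum 'I_k.+1) a (fun i => x i \o (phi \o psi)) l h).
pose T := {dffun forall i : 'I_k.+1, 'I_(n i)}.
pose F := fun t : T => \sum_(i < k.+1) a i * e i (t i).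
have sub1 : acc_pts z `<=` range F.
  move=> c [phi [hphi hc]].
  have [psi [hpsi [l hl]]] := @multi_extract R k x hb phi hphi k.+1 (leqnn _).
  have /fin_all_exists [t ht] : forall i, exists j : 'I_(n i), e i j = l i.
    move=> i; have [j jn ej] := eSurj i (l i) (hl i (ltn_ord i)).1.
    by exists (Ordinal jn).
  exists [ffun i => t i] => //.
  have h1 := zlim phi psi l (fun i => (hl i (ltn_ord i)).2).
  have h2 := @subseq_cvg R _ _ psi hpsi hc.
  rewrite (cvg_unique (@Rhausdorff R) h2 h1) /F; apply: eq_bigr => i _.
  by rewrite (ffunE t i) ht.
have [N [HN HNle]] := @card_fin_bound T R F _ sub1.
exists N; split => //.
split; last first.
  move: HNle; rewrite card_dep_ffun foldrE big_map big_enum /=.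
  by under eq_bigr do rewrite card_ord.
have [w [wIn wSurj]] := @enum_of R _ _ HN.
pose T' := ('I_N * {dffun forall i : 'I_k.+1, 'I_(if i == ord_max then 1 else n i)})%type.
pose G := fun p : T' =>
  (w p.1 - \sum_(i < k.+1 | i != ord_max) a i * e i (p.2 i)) / a ord_max.
have sub2 : acc_pts (x ord_max) `<=` range G.
  move=> c [phi [hphi hc]].
  have [psi [hpsi [l hl]]] := @multi_extract R k x hb phi hphi k.+1 (leqnn _).
  have lc : l ord_max = c.
    have h2 := @subseq_cvg R _ _ psi hpsi hc.
    exact: (cvg_unique (@Rhausdorff R) (hl ord_max (ltn_ord _)).2 h2).
  have accS : acc_pts z (\sum_(i < k.+1) a i * l i).
    exists (phi \o psi); split.
      by move=> m; exact: (@inc_comp phi psi hphi hpsi m).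
    exact: (zlim phi psi l (fun i => (hl i (ltn_ord i)).2)).
  have [j jN wj] := wSurj _ accS.
  have /fin_all_exists [t ht] : forall i : 'I_k.+1,
      exists u : 'I_(if i == ord_max then 1 else n i), i != ord_max -> e i u = l i.
    move=> i; case: (i == ord_max) => /=.
      by exists ord0.
    have [m mn em] := eSurj i (l i) (hl i (ltn_ord i)).1.
    by exists (Ordinal mn).
  exists (Ordinal jN, [ffun i => t i]) => //.
  rewrite /G /= wj (bigD1 ord_max) //=.
  have -> : \sum_(i < k.+1 | i != ord_max) a i * e i ([ffun i => t i] i) =
            \sum_(i < k.+1 | i != ord_max) a i * l i.
    by apply: eq_bigr => i hi; rewrite (ffunE t i) ht.
  by rewrite addrK mulrC mulKf // lc.
have [N' [HN' HN'le]] := @card_fin_bound T' R G _ sub2.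
have eqn : N' = n ord_max.
  apply/card_eq_II; exact: card_eq_trans (card_esym HN') (hn ord_max).
move: HN'le; rewrite eqn card_prod card_ord card_dep_ffun foldrE big_map big_enum /=.
under eq_bigr do rewrite card_ord.
rewrite (bigD1 ord_max) //= eqxx mul1n.
rewrite (eq_bigr (fun i => n i)); last by move=> i /negbTE ->.
set P := (\prod_(i < k.+1 | i != ord_max) n i)%N => hle.
have [P0|P0] := eqVneq P 0%N.
  by rewrite P0 invr0 mulr0 ler0n.
rewrite ler_pdivrMr ?ltr0n ?lt0n // -natrM ler_nat.
exact: hle.
Qed.
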